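(* Let $\Omega$ be a Stone signature and $\mathcal S$ a Stone pseudovariety. Then the class $\widehat{\mathcal S}$ of all Stone topological $\Omega$-algebras that are residually $\mathcal S$ is also a Stone pseudovariety and, for every topological space $X$, the relatively free Stone topological algebras $\overline{\Omega}_X\mathcal S$ and $\overline{\Omega}_X\widehat{\mathcal S}$ are isomorphic (as topological algebras).
   Context: A Stone signature is $\Omega=\biguplus_n\Omega_n$ with each $\Omega_n$ a compact Hausdorff 0-dimensional space. A Stone topological $\Omega$-algebra is a compact Hausdorff 0-dimensional space $A$ with continuous evaluation maps $\Omega_n\times A^n\to A$. A Stone pseudovariety is a nonempty class of Stone topological $\Omega$-algebras closed under images by onto continuous homomorphisms that are Stone topological algebras, closed subalgebras, and finite direct products. An algebra is residually $\mathcal C$ if any two distinct elements are separated by a continuous homomorphism into a member of $\mathcal C$. For a Stone pseudovariety $\mathcal T$, $\overline{\Omega}_X\mathcal T$ denotes the $\mathcal T$-free Stone topological algebra over $X$: a Stone topological algebra $F$ that is residually $\mathcal T$, with a continuous map $\iota:X\to F$ whose image generates a dense subalgebra, such that every continuous map $X\to T$ with $T\in\mathcal T$ factors uniquely as $\hat\varphi\circ\iota$ with $\hat\varphi$ a continuous homomorphism. *)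

(* Defs.v *)
From HB Require Import structures.
From mathcomp Require Import all_boot all_order.
From mathcomp Require Import all_classical all_reals all_analysis.

Set Implicit Arguments.
Unset Strict Implicit.
Unset Printing Implicit Defensive.

Local Open Scope classical_set_scope.

Definition clopen_basis (T : topologicalType) : Prop :=
  forall (x : T) (U : set T), open U -> U x ->
    exists V : set T, [/\ clopen V, V x & V `<=` U].

Definition stone_space (T : topologicalType) : Prop :=
  [/\ compact [set: T], hausdorff_space T & clopen_basis T].

(** Stone signature: Omega = disjoint union of the Omega_n, each a Stone space. *)
Record StoneSig := {
  sig_ar :> nat -> topologicalType;
  sig_stone : forall n, stone_space (sig_ar n) }.

Definition power (A : topologicalType) (n : nat) := {ptws 'I_n -> A}.

Record StoneAlg (Om : StoneSig) := {
  alg_car :> topologicalType;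
  alg_stone : stone_space alg_car;
  alg_op : forall n, Om n -> power alg_car n -> alg_car;
  alg_op_cont : forall n,
    continuous (fun p : Om n * power alg_car n => alg_op p.1 p.2) }.

Arguments alg_op {Om} s {n} _ _.

Section Defs.
Variable Om : StoneSig.

Definition is_hom (A B : StoneAlg Om) (f : A -> B) : Prop :=
  forall n (w : Om n) (xs : 'I_n -> A),
    f (alg_op A w xs) = alg_op B w (fun i => f (xs i)).

Definition cont_hom (A B : StoneAlg Om) (f : A -> B) : Prop :=
  is_hom f /\ continuous f.

Definition alg_class := StoneAlg Om -> Prop.

Definition residually (C : alg_class) (A : StoneAlg Om) : Prop :=
  forall x y : A, x <> y ->
    exists (B : StoneAlg Om) (f : A -> B), [/\ C B, cont_hom f & f x <> f y].

(** Subalgebras are given by continuous injective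
    homomorphisms (their images are exactly the closed subalgebras, up to
    isomorphism); finite direct products are given by families of continuous
    homomorphisms B -> A_i whose joint map B -> prod_i A_i is bijective. *)
Definition stone_pseudovariety (C : alg_class) : Prop :=
  [/\ exists A, C A,
      (forall (A B : StoneAlg Om) (f : A -> B),
          C A -> cont_hom f -> (forall y : B, exists x, f x = y) -> C B),
      (forall (A B : StoneAlg Om) (f : B -> A),
          C A -> cont_hom f -> injective f -> C B)
    & (forall (k : nat) (A : 'I_k -> StoneAlg Om) (B : StoneAlg Om)
          (p : forall i, B -> A i),
          (forall i, C (A i)) -> (forall i, cont_hom (p i)) ->
          (forall b1 b2, (forall i, p i b1 = p i b2) -> b1 = b2) ->
          (forall a : forall i, A i, exists b, forall i, p i b = a i) ->
          C B)].

Definition generated (A : StoneAlg Om) (S : set A) : set A :=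
  fun x => forall G : set A, S `<=` G ->
    (forall n (w : Om n) (xs : 'I_n -> A), (forall i, G (xs i)) ->
        G (alg_op A w xs)) -> G x.

Definition is_free (C : alg_class) (X : topologicalType) (F : StoneAlg Om)
    (iota : X -> F) : Prop :=
  [/\ residually C F, continuous iota,
      closure (generated (range iota)) = [set: F]
    & forall (T : StoneAlg Om) (phi : X -> T), C T -> continuous phi ->
        exists h : F -> T, (cont_hom h /\ phi = h \o iota) /\
          forall h' : F -> T, cont_hom h' -> phi = h' \o iota -> h' = h].

Definition alg_iso (A B : StoneAlg Om) : Prop :=
  exists (f : A -> B) (g : B -> A),
    [/\ cont_hom f, cont_hom g, cancel f g & cancel g f].

End Defs.

(* Main.v *)
From HB Require Import structures.
Require Import Defs.
From mathcomp Require Import all_boot all_order.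
From mathcomp Require Import all_classical all_reals all_analysis.
From mathcomp Require finmap.
Set Implicit Arguments.
Unset Strict Implicit.
Unset Printing Implicit Defensive.
Local Open Scope classical_set_scope.

Lemma stone_zero (T : topologicalType) : stone_space T -> zero_dimensional T.
Proof.
case=> _ hT cT x y xy.
have [A [oA xA yA]] := hausdorff_accessible hT xy.
have [V [cV Vx VA]] := cT x A oA (set_mem xA).
exists V; split => // Vy.
by move: yA; rewrite inE => /(_ (VA _ Vy)).
Qed.

Lemma zero_hausdorff (T : topologicalType) : zero_dimensional T -> hausdorff_space T.
Proof.
move=> zT; rewrite open_hausdorff => x y /zT [C [[oC cC] Cx Cy]].
exists (C, ~` C); first by rewrite !inE.
split => //=; first exact: closed_openC.
by apply/eqP; rewrite setICr.
Qed.

Lemma zero_stone (T : topologicalType) :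
  compact [set: T] -> zero_dimensional T -> stone_space T.
Proof.
move=> cT zT; have hT := zero_hausdorff zT; split => // x U oU Ux.
have := @zero_dimensional_cvg T x hT zT cT U.
have nU : nbhs x U by exact: open_nbhs_nbhs.
move=> /(_ nU) [D [Dx cD] DU].
by exists D.
Qed.

Lemma factor_cont (Z X Y : topologicalType) (g : Z -> X) (m : X -> Y) :
  compact [set: Z] -> hausdorff_space X -> continuous g ->
  (forall x, exists z, g z = x) -> continuous (m \o g) -> continuous m.
Proof.
move=> cZ hX cg sg cmg; apply/continuous_closedP => F cF.
have -> : m @^-1` F = g @` ((m \o g) @^-1` F).
  apply/seteqP; split => x /=.
    by move=> Fx; have [z gz] := sg x; exists z => //=; rewrite gz.
  by case=> z /= Fz <-.
apply: compact_closed => //; apply: continuous_compact.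
  exact: continuous_subspaceT.
apply: (subclosed_compact _ cZ) => //.
by move: cF; rewrite continuous_closedP in cmg; apply: cmg.
Qed.

Lemma prod_cont (X : topologicalType) (I : Type) (T : I -> topologicalType)
  (g : X -> prod_topology T) : (forall i, continuous (fun x => g x i)) -> continuous g.
Proof.
move=> cg x; apply/cvg_sup => i.
exact: (@continuous_comp_initial _ X (T i) (fun f : prod_topology T => f i) g (cg i) x).
Qed.

Lemma sub_cont (X T : topologicalType) (A : set T) (g : X -> set_type A) :
  continuous (fun x => set_val (g x)) -> continuous g.
Proof.
move=> cg; exact: (@continuous_comp_initial _ X T set_val g cg).
Qed.

Lemma val_cont (T : topologicalType) (A : set T) : continuous (@set_val T A).
Proof. exact: initial_continuous. Qed.

Lemma proj_cont (I : Type) (T : I -> topologicalType) (j : I) :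
  continuous (fun f : prod_topology T => f j).
Proof.
move=> f; have : (nbhs f) --> f by exact: cvg_id.
move/cvg_sup => /(_ j) h.
have := @initial_continuous _ _ (fun f : prod_topology T => f j) f.
apply: cvg_trans.
exact: (cvg_app (fun f : prod_topology T => f j) h).
Qed.

Lemma fst_cont (U V : topologicalType) : continuous (@fst U V).
Proof. by move=> [x y]; exact: cvg_fst. Qed.
Lemma snd_cont (U V : topologicalType) : continuous (@snd U V).
Proof. by move=> [x y]; exact: cvg_snd. Qed.

Lemma pair_cont (X U V : topologicalType) (f : X -> U) (g : X -> V) :
  continuous f -> continuous g -> continuous (fun x => (f x, g x)).
Proof. by move=> cf cg x; apply: cvg_pair; [exact: cf| exact: cg]. Qed.

Lemma zero_prod2 (U V : topologicalType) :
  zero_dimensional U -> zero_dimensional V -> zero_dimensional (U * V)%type.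
Proof.
move=> zU zV [x1 x2] [y1 y2] /eqP xy.
have [h1|h1] := eqVneq x1 y1.
  have h2 : x2 != y2 by apply/eqP => h2; apply: xy; rewrite h1 h2.
  have [C [cC Cx Cy]] := zV _ _ h2.
  exists (snd @^-1` C); split => //; exact: preimage_clopen (@snd_cont U V).
have [C [cC Cx Cy]] := zU _ _ h1.
exists (fst @^-1` C); split => //; exact: preimage_clopen (@fst_cont U V).
Qed.

Lemma zero_prodT (I : Type) (T : I -> topologicalType) :
  (forall i, zero_dimensional (T i)) -> zero_dimensional (prod_topology T).
Proof.
move=> zT x y /eqP xy.
have [i /eqP xyi] : exists i, x i <> y i.
  by apply/existsNP => W; apply: xy; exact: functional_extensionality_dep.
have [C [cC Cx Cy]] := zT i _ _ xyi.
exists ((fun f : prod_topology T => f i) @^-1` C); split => //.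
exact: preimage_clopen (@proj_cont I T i).
Qed.

Lemma zero_sub (T : topologicalType) (A : set T) :
  zero_dimensional T -> zero_dimensional (set_type A).
Proof.
move=> zT x y /eqP xy.
have xy' : set_val x != set_val y.
  by apply/eqP => h; apply: xy; apply: val_inj; rewrite -!set_valE.
have [C [cC Cx Cy]] := zT _ _ xy'.
exists (set_val @^-1` C); split => //; exact: preimage_clopen (@val_cont T A).
Qed.

Lemma compact_powerT (A : topologicalType) (n : nat) :
  compact [set: A] -> compact [set: power A n].
Proof.
move=> cA.
have -> : [set: power A n] = [set f : power A n | forall i, [set: A] (f i)].
  by apply/seteqP; split.
exact: (@tychonoff 'I_n (fun _ => A) (fun _ => [set: A])).
Qed.

Lemma compact_prodT (U V : topologicalType) :
  compact [set: U] -> compact [set: V] -> compact [set: (U * V)%type].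
Proof. by move=> cU cV; rewrite -setXTT; exact: compact_setX. Qed.

Definition Img (A : Type) (J : Type) (T : J -> topologicalType)
  (phi : A -> prod_topology T) : topologicalType := set_type (range phi).

Definition irep (A : Type) (J : Type) (T : J -> topologicalType)
  (phi : A -> prod_topology T) (e : Img phi) : A := s2val (cid2 (set_valP e)).

Lemma irepP (A : Type) (J : Type) (T : J -> topologicalType)
  (phi : A -> prod_topology T) (e : Img phi) : phi (irep e) = set_val e.
Proof. by rewrite /irep; case: cid2. Qed.

Definition iinj (A : Type) (J : Type) (T : J -> topologicalType)
  (phi : A -> prod_topology T) (a : A) : Img phi :=
  exist _ (phi a) (mem_set (imageT phi a)).

Lemma iinjE (A : Type) (J : Type) (T : J -> topologicalType)
  (phi : A -> prod_topology T) (a : A) : set_val (iinj phi a) = phi a.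
Proof. by rewrite set_valE. Qed.

Lemma iinj_eq (A : Type) (J : Type) (T : J -> topologicalType)
  (phi : A -> prod_topology T) (a b : A) : phi a = phi b -> iinj phi a = iinj phi b.
Proof. by move=> h; apply: val_inj; rewrite -set_valE !iinjE. Qed.

Lemma iinj_rep (A : Type) (J : Type) (T : J -> topologicalType)
  (phi : A -> prod_topology T) (e : Img phi) : iinj phi (irep e) = e.
Proof. by apply: val_inj; rewrite -set_valE iinjE irepP. Qed.

Lemma iinj_cont (A : topologicalType) (J : Type) (T : J -> topologicalType)
  (phi : A -> prod_topology T) : continuous phi -> continuous (iinj phi).
Proof.
move=> cphi; apply: sub_cont.
by rewrite (_ : (fun x => set_val (iinj phi x)) = phi) //; apply: funext => x; rewrite iinjE.
Qed.

Definition img_op (Om : StoneSig) (A : StoneAlg Om) (J : Type) (T : J -> topologicalType)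
  (phi : A -> prod_topology T) n (w : Om n) (es : power (Img phi) n) : Img phi :=
  iinj phi (alg_op A w (fun i => irep (es i))).

Definition congr_phi (Om : StoneSig) (A : StoneAlg Om) (Y : Type) (phi : A -> Y) :=
  forall n (w : Om n) (xs ys : 'I_n -> A), (forall i, phi (xs i) = phi (ys i)) ->
    phi (alg_op A w xs) = phi (alg_op A w ys).

Lemma img_opE (Om : StoneSig) (A : StoneAlg Om) (J : Type) (T : J -> topologicalType)
  (phi : A -> prod_topology T) (cg : congr_phi phi) n (w : Om n) (xs : 'I_n -> A) :
  img_op w (fun i => iinj phi (xs i)) = iinj phi (alg_op A w xs).
Proof.
apply: iinj_eq; apply: cg => i; by rewrite irepP iinjE.
Qed.

Lemma img_stone (Om : StoneSig) (A : StoneAlg Om) (J : Type) (T : J -> topologicalType)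
  (phi : A -> prod_topology T) : (forall j, zero_dimensional (T j)) ->
  continuous phi -> stone_space (Img phi).
Proof.
move=> zT cphi; apply: zero_stone; last exact/zero_sub/zero_prodT.
have [cA _ _] := alg_stone A.
have := continuous_compact (continuous_subspaceT (iinj_cont cphi)) cA.
congr compact; apply/seteqP; split => // e _.
by exists (irep e) => //; rewrite iinj_rep.
Qed.

Lemma img_op_cont (Om : StoneSig) (A : StoneAlg Om) (J : Type) (T : J -> topologicalType)
  (phi : A -> prod_topology T) (zT : forall j, zero_dimensional (T j))
  (cphi : continuous phi) (cg : congr_phi phi) n :
  continuous (fun p : Om n * power (Img phi) n => img_op p.1 p.2).
Proof.
pose g := fun p : Om n * power A n => (p.1, (fun i => iinj phi (p.2 i)) : power (Img phi) n).
apply: (@factor_cont _ _ _ g).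
- apply: compact_prodT; first by case: (sig_stone Om n).
  by apply: compact_powerT; case: (alg_stone A).
- apply: zero_hausdorff; apply: zero_prod2; first exact: stone_zero (sig_stone Om n).
  by apply: zero_prodT => i; exact: stone_zero (img_stone zT cphi).
- apply: pair_cont; first exact: fst_cont.
  apply: prod_cont => i /= p.
  apply: (@continuous_comp _ _ _ (fun p : Om n * power A n => p.2 i) (iinj phi)); last exact: iinj_cont.
  apply: (@continuous_comp _ _ _ snd (fun f : power A n => f i)); first exact: snd_cont.
  exact: proj_cont.
- case=> w es; exists (w, fun i => irep (es i)); rewrite /g /=; congr pair.
  by apply: functional_extensionality_dep => i; rewrite iinj_rep.
- have -> : ((fun p : Om n * power (Img phi) n => img_op p.1 p.2) \o g) =
            (fun p => iinj phi (alg_op A p.1 p.2)).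
    by apply: funext => -[w xs]; rewrite /g /= img_opE.
  move=> p; apply: (@continuous_comp _ _ _ (fun p : Om n * power A n => alg_op A p.1 p.2)).
    exact: alg_op_cont.
  exact: iinj_cont.
Qed.

Definition ImgAlg (Om : StoneSig) (A : StoneAlg Om) (J : Type) (T : J -> topologicalType)
  (phi : A -> prod_topology T) (zT : forall j, zero_dimensional (T j))
  (cphi : continuous phi) (cg : congr_phi phi) : StoneAlg Om :=
  @Build_StoneAlg Om (Img phi) (img_stone zT cphi) (@img_op Om A J T phi)
     (@img_op_cont Om A J T phi zT cphi cg).

Lemma iinj_hom (Om : StoneSig) (A : StoneAlg Om) (J : Type) (T : J -> topologicalType)
  (phi : A -> prod_topology T) (zT : forall j, zero_dimensional (T j))
  (cphi : continuous phi) (cg : congr_phi phi) :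
  cont_hom (iinj phi : A -> ImgAlg zT cphi cg).
Proof.
split; last exact: iinj_cont.
by move=> n w xs /=; rewrite img_opE.
Qed.

Lemma img_factor (Om : StoneSig) (A : StoneAlg Om) (J : Type) (T : J -> topologicalType)
  (phi : A -> prod_topology T) (zT : forall j, zero_dimensional (T j))
  (cphi : continuous phi) (cg : congr_phi phi) (Y : StoneAlg Om) (chi : A -> Y) :
  cont_hom chi -> (forall a b, phi a = phi b -> chi a = chi b) ->
  exists m : ImgAlg zT cphi cg -> Y, cont_hom m /\ forall a, m (iinj phi a) = chi a.
Proof.
move=> [hchi cchi] compat.
have mE : forall a, chi (irep (iinj phi a)) = chi a.
  by move=> a; apply: compat; rewrite irepP iinjE.
exists (fun e => chi (irep e)); split; last exact: mE.
split.
  move=> n w es /=; rewrite /img_op mE hchi //.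
apply: (@factor_cont _ _ _ (iinj phi)).
- by case: (alg_stone A).
- by case: (img_stone (A:=A) zT cphi).
- exact: iinj_cont.
- by move=> e; exists (irep e); rewrite iinj_rep.
- have -> : ((fun e => chi (irep e)) \o iinj phi) = chi by apply: funext => a /=; rewrite mE.
  exact: cchi.
Qed.

Definition PCar (Om : StoneSig) (m : nat) (C : 'I_m -> StoneAlg Om) : topologicalType :=
  prod_topology (fun j => alg_car (C j)).

Definition p_op (Om : StoneSig) (m : nat) (C : 'I_m -> StoneAlg Om) n (w : Om n)
  (ts : power (PCar C) n) : PCar C := fun j => alg_op (C j) w (fun i => ts i j).

Lemma p_stone (Om : StoneSig) (m : nat) (C : 'I_m -> StoneAlg Om) : stone_space (PCar C).
Proof.
apply: zero_stone; last by apply: zero_prodT => j; exact: stone_zero (alg_stone (C j)).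
have -> : [set: PCar C] = [set f : PCar C | forall i, [set: C i] (f i)].
  by apply/seteqP; split.
apply: (@tychonoff 'I_m (fun j => alg_car (C j)) (fun j => [set: C j])).
by move=> j; case: (alg_stone (C j)).
Qed.

Lemma p_op_cont (Om : StoneSig) (m : nat) (C : 'I_m -> StoneAlg Om) n :
  continuous (fun p : Om n * power (PCar C) n => p_op p.1 p.2).
Proof.
apply: prod_cont => j /= p.
apply: (@continuous_comp _ _ _ (fun p : Om n * power (PCar C) n =>
   (p.1, (fun i => p.2 i j) : power (C j) n))
   (fun q : Om n * power (C j) n => alg_op (C j) q.1 q.2)); last exact: alg_op_cont.
apply: pair_cont; first exact: fst_cont.
apply: prod_cont => i /= q.
apply: (@continuous_comp _ _ _ snd (fun f : power (PCar C) n => f i j)); first exact: snd_cont.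
apply: (@continuous_comp _ _ _ (fun f : power (PCar C) n => f i) (fun g : PCar C => g j)).
  exact: proj_cont.
exact: proj_cont.
Qed.

Definition PAlg (Om : StoneSig) (m : nat) (C : 'I_m -> StoneAlg Om) : StoneAlg Om :=
  @Build_StoneAlg Om (PCar C) (p_stone C) (@p_op Om m C) (@p_op_cont Om m C).

Lemma PAlg_in (Om : StoneSig) (S : alg_class Om) (m : nat) (C : 'I_m -> StoneAlg Om) :
  stone_pseudovariety S -> (forall j, S (C j)) -> S (PAlg C).
Proof.
case=> _ _ _ hP hC.
apply: (hP m C (PAlg C) (fun j (t : PAlg C) => t j)) => //.
- move=> j; split; first by [].
  exact: (@proj_cont 'I_m (fun j => alg_car (C j)) j).
- by move=> b1 b2 h; apply: functional_extensionality_dep.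
- by move=> a; exists a.
Qed.

Definition upd (X : Type) n (xs : 'I_n -> X) (i : 'I_n) (z : X) : 'I_n -> X :=
  fun k => if k == i then z else xs k.

Inductive poly (Om : StoneSig) (B : StoneAlg Om) : (B -> B) -> Prop :=
| poly_id : poly id
| poly_step (p : B -> B) n (w : Om n) (xs : 'I_n -> B) (i : 'I_n) :
    poly p -> poly (fun z => p (alg_op B w (upd xs i z))).

Lemma upd_cont (X : topologicalType) n (xs : 'I_n -> X) (i : 'I_n) :
  continuous (fun z : X => (upd xs i z : power X n)).
Proof.
apply: prod_cont => k; rewrite /upd; case: (k == i) => z.
  exact: cvg_id.
exact: cvg_cst.
Qed.

Lemma poly_cont (Om : StoneSig) (B : StoneAlg Om) (p : B -> B) :
  poly p -> continuous p.
Proof.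
elim=> [|q n w xs i _ IH]; first by move=> x; exact: cvg_id.
move=> z; apply: (@continuous_comp _ _ _ (fun z => alg_op B w (upd xs i z)) q); last exact: IH.
apply: (@continuous_comp _ _ _ (fun z : B => (w, (upd xs i z : power B n)))
   (fun p : Om n * power B n => alg_op B p.1 p.2)); last exact: alg_op_cont.
apply: pair_cont; first by move=> ?; exact: cvg_cst.
exact: upd_cont.
Qed.

Lemma ind_cont (X : topologicalType) (K : set X) :
  clopen K -> continuous (fun x => `[< K x >]).
Proof.
move=> [oK cK]; apply/continuousP => U _.
have oKc : open (~` K) by exact: closed_openC.
set f := (fun x => `[< K x >]).
have [Ut|Unt] := pselect (U true); have [Uf|Unf] := pselect (U false).
- suff -> : f @^-1` U = setT by exact: openT.
  by apply/seteqP; split => // x _ /=; rewrite /f; case: asboolP.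
- suff -> : f @^-1` U = K by [].
  by apply/seteqP; split => x /=; rewrite /f; case: asboolP.
- suff -> : f @^-1` U = ~` K by [].
  by apply/seteqP; split => x /=; rewrite /f; case: asboolP.
- suff -> : f @^-1` U = set0 by exact: open0.
  by apply/seteqP; split => x /=; rewrite /f; case: asboolP.
Qed.

Definition polyT (Om : StoneSig) (B : StoneAlg Om) := {p : B -> B | poly p}.

Definition chi (Om : StoneSig) (B : StoneAlg Om) (K : set B) (b : B) :
  prod_topology (fun _ : polyT B => bool) := fun p => `[< K (sval p b) >].

Lemma chi_cont (Om : StoneSig) (B : StoneAlg Om) (K : set B) :
  clopen K -> continuous (chi K).
Proof.
move=> cK; apply: prod_cont => -[p pp] /= b.
apply: (@continuous_comp _ _ _ p (fun x => `[< K x >])); first exact: poly_cont.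
exact: ind_cont.
Qed.

Lemma chiP (Om : StoneSig) (B : StoneAlg Om) (K : set B) (a b : B) :
  chi K a = chi K b <-> forall p, poly p -> (K (p a) <-> K (p b)).
Proof.
split.
  move=> h p pp; have := congr1 (fun f => f (exist _ p pp)) h; rewrite /chi /=.
  by move=> e; split => H; [move: e; rewrite asboolT // => /esym/asboolP|
                             move: e; rewrite (asboolT H) => /asboolP].
move=> h; apply: functional_extensionality_dep => -[p pp]; rewrite /chi /=.
by apply/asbool_equiv_eq; exact: h.
Qed.

Lemma chi_congr (Om : StoneSig) (B : StoneAlg Om) (K : set B) : congr_phi (chi K).
Proof.
move=> n w xs ys hxy.
pose hyb (k : nat) := fun i : 'I_n => if (i < k)%N then ys i else xs i.
suff H : forall k, (k <= n)%N -> chi K (alg_op B w xs) = chi K (alg_op B w (hyb k)).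
  rewrite (H n (leqnn n)); congr (chi K (alg_op B w _)).
  by apply: funext => i; rewrite /hyb ltn_ord.
elim=> [_|k IH kn].
  by congr (chi K (alg_op B w _)); apply: funext => i; rewrite /hyb.
rewrite IH; last exact: ltnW.
pose i0 : 'I_n := Ordinal kn.
have e1 : hyb k = upd (hyb k) i0 (xs i0).
  apply: funext => i; rewrite /upd /hyb; case: eqP => [->|//].
  by rewrite /= ltnn.
have e2 : hyb k.+1 = upd (hyb k) i0 (ys i0).
  apply: funext => i; rewrite /upd /hyb; case: eqP => [->|/eqP ne].
    by rewrite /= ltnSn.
  rewrite ltnS leq_eqVlt; case: eqP => // ei.
  by case/eqP: ne; apply: val_inj.
rewrite e1 e2; apply/chiP => p pp.
have := (chiP K (xs i0) (ys i0)).1 (hxy i0).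
move=> /(_ (fun z => p (alg_op B w (upd (hyb k) i0 z)))); apply.
exact: poly_step.
Qed.

Import finmap.

Definition ptd (T : topologicalType) (t : T) : Type := T.
HB.instance Definition _ (T : topologicalType) (t : T) := Topological.copy (ptd t) T.
HB.instance Definition _ (T : topologicalType) (t : T) := isPointed.Build (ptd t) t.

Lemma compact_cover' (T : topologicalType) (t : T) (A : set T) :
  compact A -> @cover_compact T A.
Proof.
move=> cA; have := @compact_cover (ptd t) => h.
have : @compact (ptd t) A by exact: cA.
by rewrite h.
Qed.

Lemma open_neq (X Y : topologicalType) (u v : X -> Y) :
  hausdorff_space Y -> continuous u -> continuous v -> open [set x | u x <> v x].
Proof.
move=> hY cu cv; rewrite openE => x /= uv.
move: hY; rewrite open_hausdorff => /(_ (u x) (v x)) [].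
  by apply/eqP.
case=> U V /= [xU yV] [oU oV /eqP UV0].
have oW : open (u @^-1` U `&` v @^-1` V).
  by apply: openI; [move: oU | move: oV]; apply: (iffLR (continuousP _)).
apply: (filterS _ (open_nbhs_nbhs (conj oW _))).
  move=> z [Uz Vz] e; have : (U `&` V) (u z) by split => //; rewrite e.
  by rewrite UV0.
by split; apply/set_mem.
Qed.

Lemma sep_finite (Om : StoneSig) (S : alg_class Om) (A : StoneAlg Om) (L : set A) (a0 : A) :
  residually S A -> clopen L ->
  exists m (C : 'I_m -> StoneAlg Om) (g : forall j, A -> C j),
   [/\ forall j, S (C j), forall j, cont_hom (g j) &
       forall x y, (forall j, g j x = g j y) -> L x -> L y].
Proof.
move=> rA [oL cL].
have [cA hA _] := alg_stone A.
pose G := L `*` ~` L.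
have cG : compact G.
  apply: compact_setX; apply: (subclosed_compact _ cA) => //.
  exact: open_closedC.
have hF : forall p : A * A, exists Bg : {B : StoneAlg Om & A -> B}, G p ->
    [/\ S (projT1 Bg), cont_hom (projT2 Bg) & projT2 Bg p.1 <> projT2 Bg p.2].
  case=> x y; have [[Lx nLy]|nG] := pselect (G (x, y)).
    have xy : x <> y by move=> e; apply: nLy; rewrite -e.
    by have [B [g [SB hg gxy]]] := rA x y xy; exists (existT _ B g).
  by exists (existT (fun B : StoneAlg Om => A -> B) A id).
have [F HF] := choice hF.
pose O := fun p : A * A => [set q : A * A | projT2 (F p) q.1 <> projT2 (F p) q.2].
have oO : forall p, G p -> open (O p).
  move=> p Gp; have [_ [_ cg] _] := HF p Gp.
  apply: open_neq.
  - by case: (alg_stone (projT1 (F p))).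
  - by move=> q; apply: (@continuous_comp _ _ _ fst); [exact: fst_cont | exact: cg].
  - by move=> q; apply: (@continuous_comp _ _ _ snd); [exact: snd_cont | exact: cg].
have covG : G `<=` cover G O.
  by move=> p Gp; exists p => //; have [_ _ ne] := HF p Gp.
have [D' sD' cD'] := compact_cover' (a0, a0) cG oO covG.
pose s : seq (A * A) := finmap.enum_fset D'.
have Gs : forall j : 'I_(size s), G (nth (a0, a0) s j).
  move=> j; have /sD' : nth (a0, a0) s j \in D' by exact: mem_nth.
  by move=> h; exact: set_mem h.
exists (size s), (fun j => projT1 (F (nth (a0,a0) s j))),
  (fun j => projT2 (F (nth (a0,a0) s j))); split.
- by move=> j; have [] := HF _ (Gs j).
- by move=> j; have [] := HF _ (Gs j).
- move=> x y hxy Lx; apply: contrapT => nLy.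
  have : G (x, y) by split.
  move/cD' => [p D'p Opxy].
  have ps : p \in s by exact: D'p.
  have ip : (index p s < size s)%N by rewrite index_mem.
  have := hxy (Ordinal ip) => /=.
  by rewrite nth_index.
Qed.

Lemma comp_cont_hom (Om : StoneSig) (A B C : StoneAlg Om) (f : A -> B) (g : B -> C) :
  cont_hom f -> cont_hom g -> cont_hom (g \o f).
Proof.
move=> [hf cf] [hg cg]; split.
  by move=> n w xs /=; rewrite hf hg.
by move=> x; apply: continuous_comp; [exact: cf | exact: cg].
Qed.

Lemma poly_lift (Om : StoneSig) (A B : StoneAlg Om) (f : A -> B) (Y : Type) (phi : A -> Y) :
  is_hom f -> (forall y, exists x, f x = y) -> congr_phi phi ->
  forall p : B -> B, poly p -> forall a b, phi a = phi b ->
    exists a' b', [/\ phi a' = phi b', f a' = p (f a) & f b' = p (f b)].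
Proof.
move=> hf sf cg p; elim => [|q n w xs i pq IH] a b e.
  by exists a, b.
have [ys hys] := choice (fun k => sf (xs k)).
pose a1 := alg_op A w (upd ys i a); pose b1 := alg_op A w (upd ys i b).
have e1 : phi a1 = phi b1 by apply: cg => k; rewrite /upd; case: eqP.
have fE : forall c, f (alg_op A w (upd ys i c)) = alg_op B w (upd xs i (f c)).
  move=> c; rewrite hf; congr (alg_op B w _); apply: funext => k.
  by rewrite /upd; case: eqP.
have [a' [b' [e' fa fb]]] := IH a1 b1 e1.
by exists a', b'; rewrite fa fb /a1 /b1 !fE.
Qed.

Lemma resS_image (Om : StoneSig) (S : alg_class Om) (hS : stone_pseudovariety S)
  (A B : StoneAlg Om) (f : A -> B) :
  residually S A -> cont_hom f -> (forall y, exists x, f x = y) -> residually S B.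
Proof.
move=> rA [hf cf] sf b1 b2 b12.
have [K [cK Kb1 nKb2]] := stone_zero (alg_stone B) (introN eqP b12).
have [a0 _] := sf b1.
pose L := f @^-1` K.
have cL : clopen L by exact: preimage_clopen.
have [m [C [g [SC hg sepL]]]] := sep_finite a0 rA cL.
pose T := fun j => alg_car (C j).
pose phi : A -> prod_topology T := fun a j => g j a.
have zT : forall j, zero_dimensional (T j) by move=> j; exact: stone_zero (alg_stone (C j)).
have cphi : continuous phi by apply: prod_cont => j; exact: (hg j).2.
have cgphi : congr_phi phi.
  move=> n w xs ys h; apply: functional_extensionality_dep => j.
  rewrite /phi (hg j).1 (hg j).1; congr (alg_op _ w _); apply: funext => i.
  exact: (congr1 (fun t => t j) (h i)).
pose E := ImgAlg zT cphi cgphi.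
have SE : S E.
  case: (hS) => _ _ hSub _.
  apply: (hSub (PAlg C) E (fun e : E => (set_val e : PAlg C))).
  - exact: PAlg_in.
  - split; last exact: val_cont.
    move=> n w es /=; rewrite /img_op iinjE; apply: functional_extensionality_dep => j.
    rewrite /phi /= (hg j).1 /p_op; congr (alg_op _ w _); apply: funext => i.
    by rewrite -(irepP (es i)).
  - by move=> x y; rewrite !set_valE => /val_inj.
pose zb := fun _ : polyT B => @discrete_zero_dimension bool.
pose D := ImgAlg zb (chi_cont cK) (@chi_congr Om B K).
pose chi' := fun a => (iinj (chi K) (f a) : D).
have hchi' : cont_hom chi'.
  apply: (@comp_cont_hom Om A B D f (iinj (chi K))); first by split.
  exact: iinj_hom.
have compat : forall a b, phi a = phi b -> chi' a = chi' b.
  move=> a b e; apply: iinj_eq; apply/chiP => p pp.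
  have [a' [b' [e' fa fb]]] := poly_lift hf sf cgphi pp e.
  rewrite -fa -fb; split.
    apply: sepL => j; exact: (congr1 (fun t => t j) e').
  apply: sepL => j; exact: (congr1 (fun t => t j) (esym e')).
have [mm [hm mE]] := img_factor zT cphi cgphi hchi' compat.
have SD : S D.
  case: (hS) => _ hIm _ _.
  apply: (hIm E D mm SE hm) => d.
  have [a ea] := sf (irep d).
  by exists (iinj phi a); rewrite mE /chi' ea iinj_rep.
exists D, (iinj (chi K)); split => //; first exact: iinj_hom.
move=> e; have : chi K b1 = chi K b2.
  by rewrite -(iinjE (chi K) b1) -(iinjE (chi K) b2) e.
move/chiP => /(_ id (poly_id B)) /= [h _].
exact: nKb2 (h Kb1).
Qed.

Lemma id_cont_hom (Om : StoneSig) (A : StoneAlg Om) : cont_hom (fun x : A => x).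
Proof. by split => // x; exact: cvg_id. Qed.

Lemma S_res (Om : StoneSig) (S : alg_class Om) (A : StoneAlg Om) : S A -> residually S A.
Proof. by move=> SA x y xy; exists A, id; split => //; exact: id_cont_hom. Qed.

Lemma res_res (Om : StoneSig) (S : alg_class Om) (A : StoneAlg Om) :
  residually (residually S) A -> residually S A.
Proof.
move=> rA x y xy; have [D [g [rD hg gxy]]] := rA x y xy.
have [C [k [SC hk kxy]]] := rD _ _ gxy.
by exists C, (k \o g); split => //; exact: comp_cont_hom.
Qed.

Lemma res_pv (Om : StoneSig) (S : alg_class Om) :
  stone_pseudovariety S -> stone_pseudovariety (residually S).
Proof.
move=> hS; have [[A0 SA0] _ _ _] := hS; split.
- by exists A0; exact: S_res.
- move=> A B f rA hf sf; exact: (@resS_image Om S hS A B f rA hf sf).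
- move=> A B f rA hf injf x y xy.
  have fxy : f x <> f y by move=> e; apply: xy; exact: injf.
  have [C [g [SC hg gxy]]] := rA _ _ fxy.
  by exists C, (g \o f); split => //; exact: comp_cont_hom.
- move=> k A B p rA hp injp _ x y xy.
  have [i pxy] : exists i, p i x <> p i y.
    by apply/existsNP => h; apply: xy; exact: injp.
  have [C [g [SC hg gxy]]] := rA i _ _ pxy.
  by exists C, (g \o p i); split => //; exact: comp_cont_hom.
Qed.

Lemma free_iso (Om : StoneSig) (S : alg_class Om) (X : topologicalType)
  (F1 F2 : StoneAlg Om) (iota1 : X -> F1) (iota2 : X -> F2) :
  is_free S iota1 -> is_free (residually S) iota2 -> alg_iso F1 F2.
Proof.
move=> [r1 c1 d1 u1] [r2 c2 d2 u2].
have [h [[hh e1] _]] := u2 F1 iota1 r1 c1.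
have [cF2 _ _] := alg_stone F2.
have [_ hF1 _] := alg_stone F1.
have injh : injective h.
  move=> x y hxy; apply: contrapT => xy.
  have [C [k [SC hk kxy]]] := res_res r2 xy.
  have ck : continuous (k \o iota2).
    by move=> z; apply: continuous_comp; [exact: c2 | exact: hk.2].
  have [u [[hu eu] _]] := u1 C (k \o iota2) SC ck.
  have [h0 [[hh0 e0] uniq0]] := u2 C (k \o iota2) (S_res SC) ck.
  have kE : k = h0 by apply: uniq0.
  have uhE : u \o h = h0.
    apply: uniq0; first exact: comp_cont_hom.
    by rewrite eu e1.
  apply: kxy; rewrite kE -uhE /= hxy //.
have rng : range h = [set: F1].
  have cl : closed (range h).
    apply: compact_closed => //; apply: continuous_compact => //.
    exact: continuous_subspaceT hh.2.
  apply/seteqP; split => // y _.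
  have -> : range h = closure (range h) by exact/closure_id.
  have : closure (generated (range iota1)) y by rewrite d1.
  apply: closure_subset => z gz.
  apply: gz.
    by move=> _ [x _ <-]; rewrite e1; exists (iota2 x).
  move=> n w xs hxs.
  exists (alg_op F2 w (fun i => s2val (cid2 (hxs i)))) => //.
  rewrite hh.1; congr (alg_op F1 w _); apply: funext => i.
  by case: cid2 => a _ ha /=; rewrite ha.
have sh : forall y, exists x, h x = y.
  move=> y; have : range h y by rewrite rng.
  by case=> x _ <-; exists x.
pose g := fun y => projT1 (cid (sh y)).
have hg : forall y, h (g y) = y by move=> y; rewrite /g; case: cid.
have gh : forall x, g (h x) = x by move=> x; apply: injh; rewrite hg.
exists g, h; split => //.
split.
  move=> n w ys; apply: injh; rewrite hg hh.1; congr (alg_op F1 w _).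
  by apply: funext => i; rewrite hg.
apply: (@factor_cont _ _ _ h) => //; first exact: hh.2.
have -> : g \o h = id by apply: funext => x; rewrite /= gh.
by move=> x; exact: cvg_id.
Qed.

Theorem corollary5p13 (Om : StoneSig) (S : alg_class Om) :
  stone_pseudovariety S ->
  stone_pseudovariety (residually S) /\
  (forall (X : topologicalType) (F1 F2 : StoneAlg Om)
          (iota1 : X -> F1) (iota2 : X -> F2),
     is_free S iota1 -> is_free (residually S) iota2 -> alg_iso F1 F2).
Proof.
move=> hS; split; first exact: res_pv.
move=> X F1 F2 iota1 iota2; exact: free_iso.
Qed.
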